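(* Let $R_1,R_2$ be nonaxisymmetric rigid components in $\mathbb{R}^3$ in generic position ($n_r^1,n_r^2>1$), and let $R_3$ be a rod ($n_r^3=1$) distinct from them. Suppose that $R_1$ and $R_2$ intersect in at least two instances, and let $\mathbf p_1,\mathbf p_2$ be points lying in two distinct instances of $R_1\cap R_2$. Suppose also that each of $R_1$ and $R_2$ intersects $R_3$ in exactly one instance, and let $\mathbf p_3\in R_1\cap R_3$ and $\mathbf p_4\in R_2\cap R_3$. Assume that neither $\mathbf p_3$ nor $\mathbf p_4$ is collinear with both $\mathbf p_1$ and $\mathbf p_2$. Then the composite body $R_1\cup R_2\cup R_3$ is rigid.
   Context: A rod is a straight segment in $\mathbb{R}^3$. A rigid component (rigid body) $R_i$ is a set of rods that moves as a single rigid body; $n_r^i$ denotes the number of rods it contains, and a component with $n_r^i=1$ is a rod. A component with $n_r^i>1$ is called nonaxisymmetric and may be planar or nonplanar. The intersection of two distinct components consists of finitely many connected pieces, called instances (contacts). Distinct components share no rod. Positions are generic apart from the stated incidences. A union of components is rigid if it is infinitesimally rigid in the following sense. An infinitesimal motion is admissible if its restriction to each component preserves, to first order, all distances between points of that component, and if points on a common rod remain collinear to first order. The union is rigid if every admissible infinitesimal motion is a Euclidean rigid motion of the whole union. Equivalently, the composite rigidity matrix has a right nullspace of dimension $6$. *)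

(* Defs.v *)
From HB Require Import structures.
From mathcomp Require Import all_boot all_order all_algebra.
From mathcomp Require Import all_classical all_reals all_analysis.
Set Implicit Arguments. Unset Strict Implicit. Unset Printing Implicit Defensive.
Import Order.TTheory GRing.Theory Num.Theory.
Import numFieldNormedType.Exports.
Local Open Scope classical_set_scope.
Local Open Scope ring_scope.

Section RodBodies.
Variable R : realType.

Definition pt3 := 'rV[R]_3.

Definition rod := (pt3 * pt3)%type.

Definition proper_rod (r : rod) : bool := r.1 != r.2.

Definition rod_pts (r : rod) : set pt3 :=
  [set x | exists2 s : R, 0 <= s <= 1 & x = r.1 + s *: (r.2 - r.1)].

(** A rigid component is a (finite) list of rods; n_r = size. *)
Definition component := seq rod.

Definition wf_component (C : component) : Prop :=
  [/\ (0 < size C)%N, all proper_rod C &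
      forall i j : nat, (i < size C)%N -> (j < size C)%N -> i <> j ->
        rod_pts (nth (0, 0) C i) <> rod_pts (nth (0, 0) C j)].

Definition comp_pts (C : component) : set pt3 :=
  [set x | exists2 r, r \in C & rod_pts r x].

Definition no_shared_rod (C D : component) : Prop :=
  forall r r', r \in C -> r' \in D -> rod_pts r <> rod_pts r'.

(** [p] and [q] lie in two distinct instances (connected pieces) of the
    intersection of components [C] and [D]. *)
Definition distinct_instances (C D : component) (p q : pt3) : Prop :=
  [/\ (comp_pts C `&` comp_pts D) p, (comp_pts C `&` comp_pts D) q &
      ~ connected_component (comp_pts C `&` comp_pts D) p q].

(** [C] and [D] intersect in exactly one instance, which contains [p]. *)
Definition single_instance (C D : component) (p : pt3) : Prop :=
  (comp_pts C `&` comp_pts D) p /\ connected (comp_pts C `&` comp_pts D).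

Definition collinear (a b c : pt3) : Prop :=
  exists (o d : pt3) (s1 s2 s3 : R),
    [/\ a = o + s1 *: d, b = o + s2 *: d & c = o + s3 *: d].

Definition noncoplanar (p1 p2 p3 p4 : pt3) : Prop :=
  forall a b c : R, a *: (p2 - p1) + b *: (p3 - p1) + c *: (p4 - p1) = 0 ->
    [/\ a = 0, b = 0 & c = 0].

(** Infinitesimal Euclidean motion x |-> x A + t with A skew-symmetric. *)
Definition skew (A : 'M[R]_3) : Prop := A^T = - A.

Definition euclid_vel (A : 'M[R]_3) (t : pt3) (x : pt3) : pt3 :=
  x *m A + t.

Definition admissible (Cs : seq component) (v : pt3 -> pt3) : Prop :=
  forall C, C \in Cs -> exists (A : 'M[R]_3) (t : pt3),
    skew A /\ forall x, comp_pts C x -> v x = euclid_vel A t x.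

Definition union_pts (Cs : seq component) : set pt3 :=
  [set x | exists2 C, C \in Cs & comp_pts C x].

(** The union is (infinitesimally) rigid: every admissible motion is a
    Euclidean infinitesimal motion of the whole union. *)
Definition rigid (Cs : seq component) : Prop :=
  forall v : pt3 -> pt3, admissible Cs v ->
    exists (A : 'M[R]_3) (t : pt3),
      skew A /\ forall x, union_pts Cs x -> v x = euclid_vel A t x.

End RodBodies.

(* Main.v *)
Require Import Defs.
From HB Require Import structures.
From mathcomp Require Import all_boot all_order all_algebra.
From mathcomp Require Import all_classical all_reals all_analysis.
From mathcomp Require Import ring lra.
Import Order.TTheory GRing.Theory Num.Theory.
Local Open Scope classical_set_scope.
Local Open Scope ring_scope.

Notation i0 := (@Ordinal 3 0 isT).
Notation i1 := (@Ordinal 3 1 isT).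
Notation i2 := (@Ordinal 3 2 isT).

Lemma ord3P (i : 'I_3) : [\/ i = i0, i = i1 | i = i2].
Proof.
case: i => [[|[|[|m]]] H]; first by constructor 1; apply/val_inj.
- by constructor 2; apply/val_inj.
- by constructor 3; apply/val_inj.
- by [].
Qed.

Lemma coordE (R : nzRingType) (x t : 'rV[R]_3) (M : 'M[R]_3) j :
  (x *m M + t) ord0 j = x ord0 i0 * M i0 j + x ord0 i1 * M i1 j + x ord0 i2 * M i2 j + t ord0 j.
Proof. rewrite !mxE !big_ord_recl big_ord0 addr0 !addrA.
have -> : lift ord0 (lift ord0 ord0) = i2 :> 'I_3 by apply/val_inj.
have -> : lift ord0 ord0 = i1 :> 'I_3 by apply/val_inj.
have -> : ord0 = i0 :> 'I_3 by apply/val_inj.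
by []. Qed.

Lemma skewE (R : realFieldType) (A : 'M[R]_3) : A^T = - A ->
  (A i0 i0 = 0 /\ A i1 i1 = 0 /\ A i2 i2 = 0) /\
   (A i1 i0 = - A i0 i1 /\ A i2 i0 = - A i0 i2 /\ A i2 i1 = - A i1 i2).
Proof.
move=> h; have e : forall i j, A j i = - A i j.
  by move=> i j; have := congr1 (fun M : 'M[R]_3 => M i j) h; rewrite !mxE.
have d : forall i, A i i = 0 by move=> i; have := e i i; lra.
by rewrite !d !(e i0 i1) !(e i0 i2) !(e i1 i2).
Qed.

Lemma sos0 (R : realDomainType) (x y z : R) : x*x + y*y + z*z = 0 -> x = 0.
Proof. move=> h. nra. Qed.

Lemma key (R : realDomainType) (a b c u0 u1 u2 q0 q1 q2 w0 w1 w2 : R) :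
  (forall x y z : R, x*u0 + y*q0 + z*w0 = 0 -> x*u1 + y*q1 + z*w1 = 0 ->
      x*u2 + y*q2 + z*w2 = 0 -> [/\ x = 0, y = 0 & z = 0]) ->
  -a*u1 - b*u2 = 0 -> a*u0 - c*u2 = 0 -> b*u0 + c*u1 = 0 ->
  (-a*w1 - b*w2)*q0 + (a*w0 - c*w2)*q1 + (b*w0 + c*w1)*q2 = 0 ->
  [/\ a = 0, b = 0 & c = 0].
Proof.
move=> NC E0 E1 E2 E4.
have sq : forall x y z : R, x*x + y*y + z*z = 0 -> [/\ x = 0, y = 0 & z = 0].
  move=> x y z h; split; nra.
pose N := a*a + b*b + c*c.
have [/sq //|NN] := eqVneq N 0.
exfalso.
pose k := c*u0 - b*u1 + a*u2.
have S0 : N*u0 = k*c.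
  apply/eqP; rewrite -subr_eq0; apply/eqP.
  have -> : N*u0 - k*c = a*(a*u0 - c*u2) + b*(b*u0 + c*u1) by rewrite /N /k; ring.
  by rewrite E1 E2; ring.
have S1 : N*u1 = k*(-b).
  apply/eqP; rewrite -subr_eq0; apply/eqP.
  have -> : N*u1 - k*(-b) = -a*(-a*u1 - b*u2) + c*(b*u0 + c*u1) by rewrite /N /k; ring.
  by rewrite E0 E2; ring.
have S2 : N*u2 = k*a.
  apply/eqP; rewrite -subr_eq0; apply/eqP.
  have -> : N*u2 - k*a = -b*(-a*u1 - b*u2) - c*(a*u0 - c*u2) by rewrite /N /k; ring.
  by rewrite E0 E1; ring.
pose det := u0*(q1*w2-q2*w1) + u1*(q2*w0-q0*w2) + u2*(q0*w1-q1*w0).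
have D0 : det = 0.
  have : N * det = 0.
    have -> : N * det = (N*u0)*(q1*w2-q2*w1) + (N*u1)*(q2*w0-q0*w2) + (N*u2)*(q0*w1-q1*w0)
      by rewrite /det; ring.
    rewrite S0 S1 S2.
    have -> : k * c * (q1 * w2 - q2 * w1) + k * - b * (q2 * w0 - q0 * w2) +
              k * a * (q0 * w1 - q1 * w0) =
              - k * ((-a*w1 - b*w2)*q0 + (a*w0 - c*w2)*q1 + (b*w0 + c*w1)*q2) by ring.
    by rewrite E4; ring.
  by move/eqP; rewrite mulf_eq0 (negbTE NN) /= => /eqP.
have G0 : u1*q2 - u2*q1 = 0.
  have [] := NC (q1*w2-q2*w1) (w1*u2 - w2*u1) (u1*q2 - u2*q1) => //.
  - by rewrite -D0 /det; ring.
  - by ring.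
  - by ring.
have G1 : u2*q0 - u0*q2 = 0.
  have [] := NC (q2*w0-q0*w2) (w2*u0 - w0*u2) (u2*q0 - u0*q2) => //.
  - by ring.
  - by rewrite -D0 /det; ring.
  - by ring.
have G2 : u0*q1 - u1*q0 = 0.
  have [] := NC (q0*w1-q1*w0) (w0*u1 - w1*u0) (u0*q1 - u1*q0) => //.
  - by ring.
  - by ring.
  - by rewrite -D0 /det; ring.
have U0 : u0*u0 + u1*u1 + u2*u2 = 0.
  have [] := NC (-(u0*q0+u1*q1+u2*q2)) (u0*u0 + u1*u1 + u2*u2) 0 => //.
  - have -> : - (u0 * q0 + u1 * q1 + u2 * q2) * u0 + (u0 * u0 + u1 * u1 + u2 * u2) * q0 + 0 * w0
       = - (u1 * (u0*q1 - u1*q0) - u2 * (u2*q0 - u0*q2)) by ring.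
    by rewrite G1 G2; ring.
  - have -> : - (u0 * q0 + u1 * q1 + u2 * q2) * u1 + (u0 * u0 + u1 * u1 + u2 * u2) * q1 + 0 * w1
       = - (u2 * (u1*q2 - u2*q1) - u0 * (u0*q1 - u1*q0)) by ring.
    by rewrite G0 G2; ring.
  - have -> : - (u0 * q0 + u1 * q1 + u2 * q2) * u2 + (u0 * u0 + u1 * u1 + u2 * u2) * q2 + 0 * w2
       = - (u0 * (u2*q0 - u0*q2) - u1 * (u1*q2 - u2*q1)) by ring.
    by rewrite G0 G1; ring.
have [h0 h1 h2] := sq _ _ _ U0.
have [] := NC 1 0 0; rewrite ?h0 ?h1 ?h2; try ring.
by move=> /eqP; rewrite oner_eq0.
Qed.

Lemma bigkey (R : realDomainType) (x10 x11 x12 x20 x21 x22 x30 x31 x32 x40 x41 x42 a1 b1 c1 s10 s11 s12 a2 b2 c2 s20 s21 s22 a3 b3 c3 s30 s31 s32 : R) :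
  (forall x y z : R, x*(x20-x10) + y*(x30-x10) + z*(x40-x10) = 0 ->
      x*(x21-x11) + y*(x31-x11) + z*(x41-x11) = 0 ->
      x*(x22-x12) + y*(x32-x12) + z*(x42-x12) = 0 -> [/\ x = 0, y = 0 & z = 0]) ->
  -a1*x11 - b1*x12 + s10 = -a2*x11 - b2*x12 + s20 ->
  a1*x10 - c1*x12 + s11 = a2*x10 - c2*x12 + s21 ->
  b1*x10 + c1*x11 + s12 = b2*x10 + c2*x11 + s22 ->
  -a1*x21 - b1*x22 + s10 = -a2*x21 - b2*x22 + s20 ->
  a1*x20 - c1*x22 + s11 = a2*x20 - c2*x22 + s21 ->
  b1*x20 + c1*x21 + s12 = b2*x20 + c2*x21 + s22 ->
  -a1*x31 - b1*x32 + s10 = -a3*x31 - b3*x32 + s30 ->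
  a1*x30 - c1*x32 + s11 = a3*x30 - c3*x32 + s31 ->
  b1*x30 + c1*x31 + s12 = b3*x30 + c3*x31 + s32 ->
  -a2*x41 - b2*x42 + s20 = -a3*x41 - b3*x42 + s30 ->
  a2*x40 - c2*x42 + s21 = a3*x40 - c3*x42 + s31 ->
  b2*x40 + c2*x41 + s22 = b3*x40 + c3*x41 + s32 ->
  [/\ a1 = a2, b1 = b2, c1 = c2 & [/\ s10 = s20, s11 = s21 & s12 = s22]].
Proof.
move=> NC h0 h1 h2 h3 h4 h5 h6 h7 h8 h9 h10 h11.
have [ha hb hc] : [/\ a1 - a2 = 0, b1 - b2 = 0 & c1 - c2 = 0].
  apply: (@key R _ _ _ _ _ _ _ _ _ _ _ _ NC); [lra|lra|lra|].
  have G0 : (-(a1-a2)*(x41-x11) - (b1-b2)*(x42-x12)) + (-(a3-a1)*(x41-x31) - (b3-b1)*(x42-x32)) = 0 by lra.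
  have G1 : ((a1-a2)*(x40-x10) - (c1-c2)*(x42-x12)) + ((a3-a1)*(x40-x30) - (c3-c1)*(x42-x32)) = 0 by lra.
  have G2 : ((b1-b2)*(x40-x10) + (c1-c2)*(x41-x11)) + ((b3-b1)*(x40-x30) + (c3-c1)*(x41-x31)) = 0 by lra.
  apply: (@eq_trans _ _ (-(((-(a1-a2)*(x41-x11) - (b1-b2)*(x42-x12)) + (-(a3-a1)*(x41-x31) - (b3-b1)*(x42-x32)))*(x40-x30)
     + (((a1-a2)*(x40-x10) - (c1-c2)*(x42-x12)) + ((a3-a1)*(x40-x30) - (c3-c1)*(x42-x32)))*(x41-x31)
     + (((b1-b2)*(x40-x10) + (c1-c2)*(x41-x11)) + ((b3-b1)*(x40-x30) + (c3-c1)*(x41-x31)))*(x42-x32)))).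
    ring.
  by rewrite G0 G1 G2; ring.
have ea : a1 = a2 by lra.
have eb : b1 = b2 by lra.
have ec : c1 = c2 by lra.
subst a2 b2 c2.
split => //; split; lra.
Qed.

Lemma diff0 (R : nzRingType) (y t u : 'rV[R]_3) (A B : 'M[R]_3) :
  (y *m A + t == y *m B + u) = (y *m (A - B) + (t - u) == 0).
Proof. by rewrite mulmxBr addrACA -opprD subr_eq0. Qed.

Lemma line_aff (R : realFieldType) (E : 'M[R]_3) (tau r1 d : 'rV[R]_3) (s s3 s4 : R) :
  s3 != s4 -> (r1 + s3 *: d) *m E + tau = 0 -> (r1 + s4 *: d) *m E + tau = 0 ->
  (r1 + s *: d) *m E + tau = 0.
Proof.
move=> ne; rewrite !mulmxDl -!scalemxAl.
move: (r1 *m E) (d *m E) => a b h3 h4.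
apply/rowP => j.
have := congr1 (fun m : 'rV[R]_3 => m ord0 j) h3.
have := congr1 (fun m : 'rV[R]_3 => m ord0 j) h4.
rewrite !mxE /= => g4 g3.
have : (s3 - s4) * b ord0 j = 0 by lra.
move/eqP; rewrite mulf_eq0 subr_eq0 (negbTE ne) /= => /eqP hb.
rewrite hb in g3 *; lra.
Qed.

Lemma ncS (R : realType) (p1 p2 p3 p4 : pt3 R) : noncoplanar p1 p2 p3 p4 ->
  forall x y z : R,
      x*(p2 ord0 i0 - p1 ord0 i0) + y*(p3 ord0 i0 - p1 ord0 i0) + z*(p4 ord0 i0 - p1 ord0 i0) = 0 ->
      x*(p2 ord0 i1 - p1 ord0 i1) + y*(p3 ord0 i1 - p1 ord0 i1) + z*(p4 ord0 i1 - p1 ord0 i1) = 0 ->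
      x*(p2 ord0 i2 - p1 ord0 i2) + y*(p3 ord0 i2 - p1 ord0 i2) + z*(p4 ord0 i2 - p1 ord0 i2) = 0 ->
      [/\ x = 0, y = 0 & z = 0].
Proof.
move=> NC x y z h0 h1 h2; apply: NC; apply/rowP => j; rewrite !mxE.
by case: (ord3P j) => ->; lra.
Qed.

Theorem mainTheorem2 (R : realType) (R1 R2 R3 : component R)
    (p1 p2 p3 p4 : pt3 R) :
  wf_component R1 -> wf_component R2 -> wf_component R3 ->
  (1 < size R1)%N -> (1 < size R2)%N -> size R3 = 1%N ->
  no_shared_rod R1 R2 -> no_shared_rod R1 R3 -> no_shared_rod R2 R3 ->
  distinct_instances R1 R2 p1 p2 ->
  single_instance R1 R3 p3 ->
  single_instance R2 R3 p4 ->
  ~ collinear p3 p1 p2 -> ~ collinear p4 p1 p2 ->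
  noncoplanar p1 p2 p3 p4 ->
  rigid [:: R1; R2; R3].
Proof.
move=> _ _ _ _ _ hR3 _ _ _ [P1 P2 _] [P3 _] [P4 _] _ _ NC v adm.
have [A1 [t1 [sk1 h1]]] := adm R1 (mem_head _ _).
have [A2 [t2 [sk2 h2]]] := adm R2 ltac:(by rewrite !inE eqxx orbT).
have [A3 [t3 [sk3 h3]]] := adm R3 ltac:(by rewrite !inE eqxx !orbT).
clear adm.
case: P1 => P1a P1b; case: P2 => P2a P2b; case: P3 => P3a P3b; case: P4 => P4a P4b.
have e1 : p1 *m A1 + t1 = p1 *m A2 + t2 := etrans (esym (h1 _ P1a)) (h2 _ P1b).
have e2 : p2 *m A1 + t1 = p2 *m A2 + t2 := etrans (esym (h1 _ P2a)) (h2 _ P2b).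
have e3 : p3 *m A1 + t1 = p3 *m A3 + t3 := etrans (esym (h1 _ P3a)) (h3 _ P3b).
have e4 : p4 *m A2 + t2 = p4 *m A3 + t3 := etrans (esym (h2 _ P4a)) (h3 _ P4b).
have [[d11 [d12 d13]] [n11 [n12 n13]]] := @skewE _ _ sk1.
have [[d21 [d22 d23]] [n21 [n22 n23]]] := @skewE _ _ sk2.
have [[d31 [d32 d33]] [n31 [n32 n33]]] := @skewE _ _ sk3.
have c1 := fun j => congr1 (fun m : 'rV[R]_3 => m ord0 j) e1.
have c2 := fun j => congr1 (fun m : 'rV[R]_3 => m ord0 j) e2.
have c3 := fun j => congr1 (fun m : 'rV[R]_3 => m ord0 j) e3.
have c4 := fun j => congr1 (fun m : 'rV[R]_3 => m ord0 j) e4.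
move: (c1 i0) (c1 i1) (c1 i2) (c2 i0) (c2 i1) (c2 i2) (c3 i0) (c3 i1) (c3 i2) (c4 i0) (c4 i1) (c4 i2).
rewrite /= !coordE ?d11 ?d12 ?d13 ?n11 ?n12 ?n13 ?d21 ?d22 ?d23 ?n21 ?n22 ?n23 ?d31 ?d32 ?d33 ?n31 ?n32 ?n33.
move=> q0 q1 q2 q3 q4 q5 q6 q7 q8 q9 q10 q11.
have [ea eb ec [f0 f1 f2]] := @bigkey R (p1 ord0 i0) (p1 ord0 i1) (p1 ord0 i2) (p2 ord0 i0) (p2 ord0 i1) (p2 ord0 i2) (p3 ord0 i0) (p3 ord0 i1) (p3 ord0 i2) (p4 ord0 i0) (p4 ord0 i1) (p4 ord0 i2) (A1 i0 i1) (A1 i0 i2) (A1 i1 i2) (t1 ord0 i0) (t1 ord0 i1) (t1 ord0 i2) (A2 i0 i1) (A2 i0 i2) (A2 i1 i2) (t2 ord0 i0) (t2 ord0 i1) (t2 ord0 i2) (A3 i0 i1) (A3 i0 i2) (A3 i1 i2) (t3 ord0 i0) (t3 ord0 i1) (t3 ord0 i2) (@ncS _ _ _ _ _ NC)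
  ltac:(lra) ltac:(lra) ltac:(lra) ltac:(lra) ltac:(lra) ltac:(lra)
  ltac:(lra) ltac:(lra) ltac:(lra) ltac:(lra) ltac:(lra) ltac:(lra).
have eA : A2 = A1.
  apply/matrixP => i j; case: (ord3P i) => ->; case: (ord3P j) => ->;
  by rewrite ?d11 ?d12 ?d13 ?n11 ?n12 ?n13 ?d21 ?d22 ?d23 ?n21 ?n22 ?n23 ?ea ?eb ?ec.
have et : t2 = t1.
  by apply/rowP => j; case: (ord3P j) => ->; rewrite ?f0 ?f1 ?f2.
rewrite eA et in e4.
exists A1, t1; split => // x [C]; rewrite !inE => /or3P [] /eqP -> Cx.
- exact: h1.
- by rewrite h2 // eA et.
have [r Er] : exists r, R3 = [:: r].
  by move: hR3; case: (R3) => [|r [|]] //= _; exists r.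
rewrite (h3 _ Cx); rewrite Er in Cx P3b P4b.
case: Cx => r0; rewrite inE => /eqP -> [s _ ->].
case: P3b => r3; rewrite inE => /eqP -> [s3 _ ep3].
case: P4b => r4; rewrite inE => /eqP -> [s4 _ ep4].
rewrite /euclid_vel; apply/eqP; rewrite diff0; apply/eqP.
apply: (@line_aff _ _ _ _ _ _ s3 s4).
- apply/eqP => es.
  case: (NC 0 1 (-1)).
    by rewrite ep3 ep4 es scale0r add0r scale1r scaleN1r addrN.
  by move=> _ /eqP; rewrite oner_eq0.
- by rewrite -ep3; apply/eqP; rewrite -diff0; apply/eqP; rewrite e3.
- by rewrite -ep4; apply/eqP; rewrite -diff0; apply/eqP; rewrite e4.
Qed.
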